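(* Assume the setting below and define $$\alpha_{ST}(t)=\max_{0\le i\le N-1}\ \sum_{j=i}^{i+N-1}L_j\,C\left\lceil\frac{t-o_{j,i}}{p}\right\rceil,\qquad t\ge 0.$$ Then for all $s\in\mathbb R$ and $t\ge0$, $C\cdot\Delta t_{ST}(s,s+t)\le\alpha_{ST}(t)$; i.e. $\alpha_{ST}$ is an arrival curve of the credit-frozen part due to ST traffic.
   Context: Fix an output port with physical link rate $C>0$. Its gate control list (GCL) is periodic with period $p>0$ and contains $N\ge 1$ scheduled-traffic (ST) windows per period. Window $k\in\{0,\dots,N-1\}$ is the interval $[o_k,o_k+L_k)$, where $0\le o_0<o_1<\dots<o_{N-1}<p$, $L_k\ge 0$, $o_k+L_k\le o_{k+1}$ for $k<N-1$ and $o_{N-1}+L_{N-1}\le o_0+p$. Indices are extended to all integers periodically: $o_{k+N}=o_k+p$, $L_{k+N}=L_k$. Relative offsets are $o_{j,i}=o_j-o_i$. Let $S=\bigcup_{k\in\mathbb Z}[o_k,o_k+L_k)$ and for $s\le t$ let $\Delta t_{ST}(s,t)$ be the Lebesgue measure of $S\cap[s,t]$. *)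

(* Defs.v *)
From HB Require Import structures.
From mathcomp Require Import all_boot all_order all_algebra.
From mathcomp Require Import all_classical all_reals all_analysis.
Set Implicit Arguments. Unset Strict Implicit. Unset Printing Implicit Defensive.
Import Order.TTheory GRing.Theory Num.Theory.
Local Open Scope ring_scope.
Local Open Scope classical_set_scope.

(* Periodic extension of window offsets/lengths to all integers:
   o_{k+N} = o_k + p, L_{k+N} = L_k.  Only o 0..o (N-1), L 0..L (N-1) matter. *)
Definition oext (R : realType) (N : nat) (p : R) (o : nat -> R) (k : int) : R :=
  o `|(k %% N)%Z|%N + ((k %/ N)%Z)%:~R * p.

Definition Lext (R : realType) (N : nat) (L : nat -> R) (k : int) : R :=
  L `|(k %% N)%Z|%N.

Definition ST_set (R : realType) (N : nat) (p : R) (o L : nat -> R) : set R :=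
  \bigcup_(k in [set: int]) [set x : R | oext N p o k <= x < oext N p o k + Lext N L k].

Definition delta_ST (R : realType) (N : nat) (p : R) (o L : nat -> R) (s t : R) : \bar R :=
  lebesgue_measure (ST_set N p o L `&` `[s, t]).

Definition alpha_ST (R : realType) (N : nat) (p C : R) (o L : nat -> R) (t : R) : R :=
  \big[Num.max/0]_(i < N)
    \sum_(i <= j < i + N)
      Lext N L j%:Z * C *
        (Num.ceil ((t - (oext N p o j%:Z - oext N p o i%:Z)) / p))%:~R.

(* Main.v *)
Require Import Defs.
From HB Require Import structures.
From mathcomp Require Import all_boot all_order all_algebra.
From mathcomp Require Import all_classical all_reals all_analysis.
From mathcomp Require Import ring lra.
Import Order.TTheory GRing.Theory Num.Theory.
Local Open Scope ring_scope.

Section Arith.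
Local Open Scope classical_set_scope.
Variables (R : realType) (C p : R) (N : nat) (o L : nat -> R).
Hypotheses (hC : 0 < C) (hp : 0 < p) (hN : (1 <= N)%N)
  (ho0 : 0 <= o 0%N)
  (hoinc : forall k : nat, (k.+1 < N)%N -> o k < o k.+1)
  (holast : o N.-1 < p)
  (hL : forall k : nat, (k < N)%N -> 0 <= L k)
  (hdisj : forall k : nat, (k.+1 < N)%N -> o k + L k <= o k.+1)
  (hwrap : o N.-1 + L N.-1 <= o 0%N + p).

Lemma N0 : (N%:Z != 0).
Proof. by rewrite eqz_nat -lt0n. Qed.

Lemma oextE (r : nat) (q : int) : (r < N)%N ->
  oext N p o (r%:Z + q * N%:Z) = o r + q%:~R * p.
Proof.
move=> rN; rewrite /oext [r%:Z + _]addrC modzMDl divzMDl ?N0 // modz_nat modn_small //.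
by rewrite divz_small ?addr0 // lez_nat ltz_nat /= absz_nat.
Qed.

Lemma LextE (r : nat) (q : int) : (r < N)%N ->
  Lext N L (r%:Z + q * N%:Z) = L r.
Proof. by move=> rN; rewrite /Lext [r%:Z + _]addrC modzMDl modz_nat modn_small. Qed.

Lemma decomp (k : int) : exists r q, (r < N)%N /\ k = r%:Z + q * N%:Z.
Proof.
exists `|(k %% N)%Z|%N, (k %/ N)%Z; split.
  by rewrite -ltz_nat gez0_abs ?modz_ge0 ?N0 // ltz_pmod.
by rewrite gez0_abs ?modz_ge0 ?N0 // addrC -divz_eq.
Qed.

Lemma Lext_ge0 k : 0 <= Lext N L k.
Proof. by have [r [q [rN ->]]] := decomp k; rewrite LextE // hL. Qed.

Lemma step k : oext N p o k + Lext N L k <= oext N p o (k + 1) /\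
  oext N p o k < oext N p o (k + 1).
Proof.
have [r [q [rN ->]]] := decomp k; rewrite oextE // LextE //.
case: (ltnP r.+1 N) => h.
  have -> : r%:Z + q * N%:Z + 1 = r.+1%:Z + q * N%:Z.
    by rewrite -addrAC -[r.+1]addn1 PoszD.
  rewrite oextE //; split; first by have := hdisj _ h; lra.
  by have := hoinc _ h; lra.
have rE : r = N.-1 by apply/eqP; rewrite eqn_leq -ltnS prednK // rN /= -ltnS prednK.
have -> : r%:Z + q * N%:Z + 1 = 0%N%:Z + (q + 1) * N%:Z.
  have hNz : (N%:Z) = N.-1%:Z + 1 by rewrite -[1]/(1%N%:Z) -PoszD addn1 prednK.
  by rewrite rE hNz; ring.
rewrite oextE // rmorphD /= mulrDl mul1r; move: hwrap holast; rewrite -rE.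
move=> hw hl; have h0 := ho0; move: (q%:~R * p) => qp; split; lra.
Qed.

Lemma mono k (m : nat) : (0 < m)%N ->
  oext N p o k + Lext N L k <= oext N p o (k + m%:Z) /\
  oext N p o k < oext N p o (k + m%:Z).
Proof.
elim: m => // m IH _.
case: m IH => [|m] IH; first exact: step.
have [IH1 IH2] := IH isT.
have [s1 s2] := step (k + m.+1%:Z).
have -> : k + (m.+2)%:Z = k + m.+1%:Z + 1 by rewrite -addrA -[1]/(1%N%:Z) -PoszD addn1.
by split; [exact: le_trans IH1 (ltW s2) | exact: lt_trans IH2 s2].
Qed.

Lemma mono_le k (m : nat) : oext N p o k <= oext N p o (k + m%:Z).
Proof.
case: m => [|m]; first by rewrite addr0.
by have [_ /ltW] := mono k m.+1 (ltn0Sn m).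
Qed.

Lemma le_int_ex (k k' : int) : k <= k' -> exists m : nat, k' = k + m%:Z.
Proof.
move=> h; exists `|k' - k|%N; rewrite gez0_abs ?subr_ge0 //.
by rewrite addrCA subrr addr0.
Qed.

Lemma oext_per k (m : int) :
  oext N p o (k + m * N%:Z) = oext N p o k + m%:~R * p.
Proof.
have [r [q [rN ->]]] := decomp k.
by rewrite -addrA -mulrDl !oextE // rmorphD mulrDl addrA.
Qed.

Lemma Lext_per k (m : int) : Lext N L (k + m * N%:Z) = Lext N L k.
Proof.
have [r [q [rN ->]]] := decomp k.
by rewrite -addrA -mulrDl !LextE.
Qed.
Local Notation oe := (oext N p o).
Local Notation Le := (Lext N L).
Let W k := [set x : R | oe k <= x < oe k + Le k].
Let S := ST_set N p o L.

Lemma W_meas k : measurable (W k).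
Proof. rewrite /W -set_itvco; exact: measurable_itv. Qed.

Lemma S_meas : measurable S.
Proof.
apply: countable_bigcupT_measurable; first exact: countableP.
move=> k; exact: W_meas.
Qed.

Lemma SP x : S x <-> exists k, W k x.
Proof. by split => [[k _ h]|[k h]]; [exists k | exists k]. Qed.

Lemma W_le k : (lebesgue_measure (W k) <= (Le k)%:E)%E.
Proof.
rewrite /W -set_itvco lebesgue_measure_itv /=.
case: ifPn => _; last by rewrite lee_fin Lext_ge0.
by rewrite -EFinB lee_fin addrC addKr.
Qed.

Lemma count (i : nat) (q : int) (t : R) : (i < N)%N -> 0 <= t ->
  (lebesgue_measure (S `&` `[oe (i%:Z + q * N%:Z), (oe (i%:Z + q * N%:Z) + t)%R])
  <= (\sum_(j < N) Le (i + j)%N%:Z *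
      (Num.ceil ((t - (oe (i + j)%N%:Z - oe i%:Z)) / p))%:~R)%:E)%E.
Proof.
move=> iN t0.
set a := oe (i%:Z + q * N%:Z).
have aE : a = oe i%:Z + q%:~R * p by rewrite /a oext_per.
pose D := fun j : nat => oe (i + j)%N%:Z - oe i%:Z.
have hD j : (j < N)%N -> 0 <= D j < p.
  move=> jN; rewrite /D subr_ge0 PoszD mono_le /=.
  have [_ h] := mono (i%:Z + j%:Z) (N - j) (ltac:(by rewrite subn_gt0)).
  rewrite -addrA -!PoszD subnKC ?(ltnW jN) // in h.
  have := oext_per i%:Z 1; rewrite mul1r => h1.
  by rewrite ltrBlDl; apply: (lt_le_trans h); rewrite PoszD h1 mul1r.
pose c := fun j : nat => `|Num.ceil ((t - D j) / p)|%N.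
pose M := `|Num.ceil (t / p)|%N.+1.
have hc j : (j < N)%N ->
  [/\ (c j <= M)%N, (c j)%:R = (Num.ceil ((t - D j) / p))%:~R :> R
    & (t - D j) / p <= (c j)%:R].
  move=> jN; have /andP[D0 Dp] := hD j jN.
  have cge0 : 0 <= Num.ceil ((t - D j) / p).
    rewrite ceil_ge0 ?num_real // ltr_pdivlMr //.
    by lra.
  have cE : (c j)%:R = (Num.ceil ((t - D j) / p))%:~R :> R.
    by rewrite /c -[in RHS](gez0_abs cge0).
  split => //; last by rewrite cE real_ceil_ge ?num_real.
  rewrite /c /M; apply: leqW; rewrite -lez_nat !gez0_abs //; last first.
    by rewrite ceil_ge0 ?num_real //; apply: lt_le_trans (divr_ge0 t0 (ltW hp)).
  apply: le_ceil; rewrite ler_pM2r ?invr_gt0 //; lra.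
have hMt : t < M%:R * p.
  rewrite -ltr_pdivrMr // /M -addn1 natrD.
  have : t / p <= (Num.ceil (t / p))%:~R by rewrite real_ceil_ge ?num_real.
  have -> : (`|Num.ceil (t / p)|%N%:R : R) = (Num.ceil (t / p))%:~R.
    by rewrite -[in RHS](gez0_abs (m := Num.ceil (t / p))) // ceil_ge0 ?num_real //; apply: lt_le_trans (divr_ge0 t0 (ltW hp)).
  by move=> h; apply: (le_lt_trans h); rewrite ltrDl.
pose F := fun j n : nat =>
  W ((i + j)%N%:Z + (q + n%:Z) * N%:Z) `&` `[a, (a + t)%R].
pose G := fun j : nat => \big[setU/set0]_(n < M) F j n.
have Fm j n : measurable (F j n).
  by apply: measurableI; [exact: W_meas | exact: measurable_itv].
have Gm j : measurable (G j) by apply: bigsetU_measurable => n _; exact: Fm.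
have okE j n : oe ((i + j)%N%:Z + (q + n%:Z) * N%:Z) = a + D j + n%:R * p.
  rewrite oext_per aE /D rmorphD /=; ring.
have LkE j n : Le ((i + j)%N%:Z + (q + n%:Z) * N%:Z) = Le (i + j)%N%:Z.
  by rewrite Lext_per.
have sub : S `&` `[a, (a + t)%R] `<=` \big[setU/set0]_(j < N) G j.
  move=> x [/SP [k Wk]] /=; rewrite in_itv /= => /andP[ax xat].
  move: Wk => /andP[kx xk].
  case: (leP (i%:Z + q * N%:Z) k) => hk; last first.
    have [m hm] := le_int_ex _ _ (ltW hk).
    have m0 : (0 < m)%N by move: hk; rewrite hm ltrDl ltz_nat.
    have [h1 _] := mono k m m0; rewrite -hm -/a in h1.
    by exfalso; move: h1 ax xk; lra.
  have [m hm] := le_int_ex _ _ hk.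
  have mE := divn_eq m N.
  have kE : k = (i + m %% N)%N%:Z + (q + (m %/ N)%:Z) * N%:Z.
    by rewrite hm {1}mE !PoszD PoszM; ring.
  have jN : (m %% N < N)%N by rewrite ltn_pmod.
  have nM : (m %/ N < M)%N.
    rewrite ltnNge; apply/negP => hn.
    have /andP[D0 _] := hD _ jN.
    have : M%:R * p <= (m %/ N)%:R * p by apply: ler_wpM2r; [exact: ltW | rewrite ler_nat].
    move=> hle; move: kx; rewrite kE okE => kx; move: hle kx hMt.
    move: (M%:R * p) ((m %/ N)%:R * p) => Mp np.
    by move=> *; lra.
  rewrite -bigcup_mkord; exists (m %% N)%N => //.
  rewrite /G -bigcup_mkord; exists (m %/ N)%N => //.
  rewrite /F -kE; split; first by rewrite /W /= kx xk.
  by rewrite /= ?in_itv /= ax xat.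
have mA : measurable (S `&` `[a, (a + t)%R]).
  by apply: measurableI; [exact: S_meas | exact: measurable_itv].
apply: le_trans (@content_subadditive _ _ _ lebesgue_measure _ G N
  (fun k _ => Gm k) mA sub) _.
rewrite -sumEFin; apply: lee_sum => j _.
have [hcM hcE hcle] := hc j (ltn_ord j).
rewrite (_ : Le (i + j)%N%:Z * _ = Le (i + j)%N%:Z *+ c j); last first.
  by rewrite -mulr_natr hcE.
apply: le_trans (@content_subadditive _ _ _ lebesgue_measure (G j) (F j) M
  (fun k _ => Fm j k) (Gm j) (@subset_refl _ _)) _.
apply: (@le_trans _ _ (\sum_(n < M)
   (if (n < c j)%N then Le (i + j)%N%:Z else 0)%:E)).
  apply: lee_sum => n _; case: ifPn => hn.
    rewrite -(LkE j n); apply: le_trans (W_le _).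
    by apply: le_measure; rewrite ?inE; [exact: Fm | exact: W_meas | exact: subIsetl].
  apply: (@le_trans _ _ (lebesgue_measure [set (a + t)%R])).
    apply: le_measure; rewrite ?inE; [exact: Fm | exact: measurable_set1 |].
    move=> x [/andP[kx _]]; rewrite /= ?in_itv /= => /andP[_ xat].
    apply/eqP; rewrite eq_le xat /=; apply: le_trans kx.
    rewrite okE.
    have : (c j <= n)%N by rewrite leqNgt.
    rewrite -(ler_nat R) => hcn.
    have : t - D j <= n%:R * p.
      by rewrite -ler_pdivrMr //; apply: le_trans hcle hcn.
    by lra.
  by rewrite lebesgue_measure_set1.
rewrite sumEFin lee_fin.
rewrite -(big_mkord xpredT (fun n => if (n < c j)%N then Le (i + j)%N%:Z else 0)).
rewrite (big_cat_nat (leq0n (c j)) hcM) /=.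
have -> : \sum_(0 <= n < c j) (if (n < c j)%N then Le (i + j)%N%:Z else 0)
    = \sum_(0 <= n < c j) Le (i + j)%N%:Z.
  by apply: eq_big_nat => n /andP[_ ->].
have -> : \sum_(c j <= n < M) (if (n < c j)%N then Le (i + j)%N%:Z else 0)
    = \sum_(c j <= n < M) (0 : R).
  by apply: eq_big_nat => n /andP[h _]; rewrite ltnNge h.
by rewrite big1_eq addr0 sumr_const_nat subn0.
Qed.

Lemma itv_cc (x y : R) : x <= y -> lebesgue_measure (`[x, y] : set R) = (y - x)%:E.
Proof.
move=> xy; rewrite lebesgue_measure_itv /=; case: ifPn => h.
  by rewrite -EFinB.
move: h; rewrite lte_fin ltNge negbK => yx.
have -> : y = x by apply/eqP; rewrite eq_le yx xy.
by rewrite subrr.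
Qed.

Lemma itv_co (x y : R) : x <= y -> lebesgue_measure (`[x, y[ : set R) = (y - x)%:E.
Proof.
move=> xy; rewrite lebesgue_measure_itv /=; case: ifPn => h.
  by rewrite -EFinB.
move: h; rewrite lte_fin ltNge negbK => yx.
have -> : y = x by apply/eqP; rewrite eq_le yx xy.
by rewrite subrr.
Qed.

Lemma itv_oc (x y : R) : x <= y -> lebesgue_measure (`]x, y] : set R) = (y - x)%:E.
Proof.
move=> xy; rewrite lebesgue_measure_itv /=; case: ifPn => h.
  by rewrite -EFinB.
move: h; rewrite lte_fin ltNge negbK => yx.
have -> : y = x by apply/eqP; rewrite eq_le yx xy.
by rewrite subrr.
Qed.

Lemma before_end (k k0 : int) : k <= k0 -> oe k + Le k <= oe k0 + Le k0.
Proof.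
move=> h; have [[|m] hm] := le_int_ex _ _ h.
  by rewrite hm addr0.
have [h1 _] := mono k m.+1 (ltn0Sn m); rewrite -hm in h1.
by apply: (le_trans h1); rewrite lerDl Lext_ge0.
Qed.

Lemma after_start (k k0 : int) : k0 < k -> oe (k0 + 1) <= oe k.
Proof.
rewrite -lezD1 => h; have [m ->] := le_int_ex _ _ h; exact: mono_le.
Qed.

Lemma reduce (s t : R) : 0 <= t -> exists k : int,
  (lebesgue_measure (S `&` `[s, (s + t)%R]) <=
   lebesgue_measure (S `&` `[oe k, (oe k + t)%R]))%E.
Proof.
move=> t0.
set q := Num.floor ((s - o 0%N) / p).
have /andP[q1 q2] := floor_itv ((s - o 0%N) / p).
rewrite -/q in q1 q2.
have hq1 : o 0%N + q%:~R * p <= s.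
  by move: q1; rewrite ler_pdivlMr //; move: (q%:~R * p) => qp; lra.
have hq2 : s < o 0%N + q%:~R * p + p.
  by move: q2; rewrite rmorphD /= ltr_pdivrMr // mulrDl mul1r; move: (q%:~R * p) => qp; lra.
pose P := fun r : nat => (r < N)%N && (o r + q%:~R * p <= s).
have exP : exists r, P r by exists 0%N; rewrite /P hN hq1.
have ubP : forall r, P r -> (r <= N)%N by move=> r /andP[/ltnW].
case: (ex_maxnP exP ubP) => r /andP[rN hr] hmax.
set k0 := r%:Z + q * N%:Z.
have hk0 : oe k0 <= s by rewrite /k0 oextE.
have hk1 : s < oe (k0 + 1).
  case: (ltnP r.+1 N) => h.
    have -> : k0 + 1 = r.+1%:Z + q * N%:Z.
      by rewrite /k0 -addrAC -[r.+1]addn1 PoszD.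
    rewrite oextE // ltNge; apply/negP => hle.
    by have := hmax r.+1; rewrite /P h hle => /(_ isT); rewrite ltnn.
  have rE : r.+1 = N by apply/eqP; rewrite eqn_leq rN h.
  have -> : k0 + 1 = 0%N%:Z + (q + 1) * N%:Z.
    by rewrite /k0 -addrAC -[1]/(1%N%:Z) -PoszD addn1 rE; ring.
  by rewrite oextE // rmorphD /= mulrDl mul1r addrA.
have Sm := S_meas.
have mI a b : measurable (S `&` `[a, b]).
  by apply: measurableI => //; exact: measurable_itv.
case: (leP (oe k0 + Le k0) s) => hA.
  exists (k0 + 1); apply: le_measure; rewrite ?inE; [exact: mI| exact: mI|].
  move=> x [/SP [k /andP[kx xk]]]; rewrite /= ?in_itv /= => /andP[sx xst].
  split; first by apply/SP; exists k; rewrite /W /= kx xk.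
  rewrite /= ?in_itv /=; apply/andP; split; last by lra.
  case: (leP k k0) => hk.
    by have := before_end _ _ hk; lra.
  exact: le_trans (after_start _ _ hk) kx.
exists k0.
set a := oe k0; rewrite -/a in hA hk0.
have hLk := Lext_ge0 k0.
case: (leP t (s - a)) => hd.
  apply: (@le_trans _ _ (lebesgue_measure (`[s, (s + t)%R] : set R))).
    apply: le_measure; rewrite ?inE; [exact: mI | exact: measurable_itv | exact: subIsetr].
  rewrite itv_cc ?lerDl // (_ : s + t - s = t); last by ring.
  apply: (@le_trans _ _ (lebesgue_measure (`[a, (a + t)%R] : set R))).
    by rewrite itv_cc ?lerDl // (_ : a + t - a = t); last by ring.
  apply: le_measure; rewrite ?inE; [exact: measurable_itv | exact: mI |].
  move=> x; rewrite /= ?in_itv /= => /andP[ax xat]; split.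
    by apply/SP; exists k0; rewrite /W /= -/a ax /=; lra.
  by rewrite /= ?in_itv /= ax xat.
set A1 := S `&` `[s, (a + t)%R].
have hA1 : measurable A1 by exact: mI.
apply: (@le_trans _ _ (lebesgue_measure (A1 `|` `]a + t, s + t]))).
  apply: le_measure; rewrite ?inE; [exact: mI | apply: measurableU => //; exact: measurable_itv |].
  move=> x [Sx]; rewrite /= ?in_itv /= => /andP[sx xst].
  case: (leP x (a + t)) => h.
    by left; split => //; rewrite /= ?in_itv /= sx h.
  by right; rewrite /= ?in_itv /= ?h ?xst ?andbT.
have hU : (lebesgue_measure (A1 `|` `](a + t)%R, (s + t)%R]) <=
   lebesgue_measure A1 + lebesgue_measure (`](a + t)%R, (s + t)%R] : set R))%E.
  exact: (measureU2 lebesgue_measure hA1 (measurable_itv _)).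
apply: le_trans hU _.
rewrite itv_oc; last by lra.
apply: (@le_trans _ _ (lebesgue_measure (`[a, s[ `|` A1))); last first.
  apply: le_measure; rewrite ?inE; [apply: measurableU => //; exact: measurable_itv | exact: mI |].
  move=> x [|[Sx]]; rewrite /= ?in_itv /=.
    move=> /andP[ax xs]; split.
      by apply/SP; exists k0; rewrite /W /= -/a ax /=; lra.
    by rewrite /= ?in_itv /= ax /=; lra.
  move=> /andP[sx xat]; split => //; rewrite /= ?in_itv /= xat andbT; lra.
have hD : (`[a, s[ `&` A1 = set0).
  apply/seteqP; split => // x [] ; rewrite /= ?in_itv /= => /andP[_ xs] [_].
  by rewrite /= ?in_itv /= => /andP[sx _]; lra.
have hU2 : lebesgue_measure (`[a, s[ `|` A1) =
   (lebesgue_measure (`[a, s[ : set R) + lebesgue_measure A1)%E.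
  exact: (measureU lebesgue_measure (measurable_itv _) hA1 hD).
rewrite hU2 itv_co // addeC (_ : s + t - (a + t) = s - a) //; ring.
Qed.

Lemma main (s t : R) : 0 <= t ->
  (C%:E * delta_ST N p o L s (s + t) <= (alpha_ST N p C o L t)%:E)%E.
Proof.
move=> t0; have [k hk] := reduce s t t0.
have [i [q [iN kE]]] := decomp k.
apply: (@le_trans _ _ (C%:E * lebesgue_measure (S `&` `[oe k, (oe k + t)%R]))%E).
  by rewrite lee_pmul2l ?lte_fin.
have hc := count i q t iN t0.
rewrite kE; apply: (@le_trans _ _ (C%:E * (\sum_(j < N) Le (i + j)%N%:Z *
      (Num.ceil ((t - (oe (i + j)%N%:Z - oe i%:Z)) / p))%:~R)%:E)%E).
  by rewrite lee_pmul2l ?lte_fin.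
rewrite -EFinM lee_fin /alpha_ST.
apply: le_trans (le_bigmax _ _ (Ordinal iN)).
rewrite /= -[X in \sum_(X <= _ < _) _]add0n big_addn addKn big_mkord mulr_sumr.
rewrite le_eqVlt; apply/orP; left; apply/eqP.
by apply: eq_bigr => j _; rewrite addnC; ring.
Qed.
End Arith.

Theorem lemma1 (R : realType) (C p : R) (N : nat) (o L : nat -> R)
  (hC : 0 < C) (hp : 0 < p) (hN : (1 <= N)%N)
  (ho0 : 0 <= o 0%N)
  (hoinc : forall k : nat, (k.+1 < N)%N -> o k < o k.+1)
  (holast : o N.-1 < p)
  (hL : forall k : nat, (k < N)%N -> 0 <= L k)
  (hdisj : forall k : nat, (k.+1 < N)%N -> o k + L k <= o k.+1)
  (hwrap : o N.-1 + L N.-1 <= o 0%N + p) :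
  forall s t : R, 0 <= t ->
    (C%:E * delta_ST N p o L s (s + t) <= (alpha_ST N p C o L t)%:E)%E.
Proof.
move=> s t t0; by apply: main.
Qed.
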